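(* The functor $G:\mathbf{cMet}_1\to\mathrm{ER}(\mathbf U)$, $G(X,d)=(X,d)$, $G(f)=[(x,y)\mapsto d(f(x),y)]$, is full and faithful. In particular, for complete metric spaces $(X,d_X),(Y,d_Y)$ of diameter at most 1 and every functional relation $F:(X,d_X)\to(Y,d_Y)$ in $\mathrm{ER}(\mathbf U)$ there is a unique uniformly continuous $f:X\to Y$ with $[F]=G(f)$.
   Context: $\mathbf{cMet}_1$: complete metric spaces with all distances $\le 1$ and uniformly continuous maps. For functions $\alpha,\beta:Z\to[0,1]$ write $\alpha\sqsubseteq\beta$ if for every $\varepsilon>0$ there exists $\delta>0$ such that for all $z\in Z$, $\alpha(z)\le\delta$ implies $\beta(z)\le\varepsilon$. The category $\mathrm{ER}(\mathbf U)$: objects are pairs $(X,R)$ with $X$ a set and $R:X\times X\to[0,1]$ such that $R(x,x)=0$ for all $x$, $R(x,y)\sqsubseteq R(y,x)$ as functions of $(x,y)$, and $\max(R(x,y),R(y,z))\sqsubseteq R(x,z)$ as functions of $(x,y,z)$. A functional relation $(X,R)\to(Y,S)$ is a function $F:X\times Y\to[0,1]$ with $\max(F(x,y),R(x,x'),S(y,y'))\sqsubseteq F(x',y')$ as functions of $(x,x',y,y')$, $\max(F(x,y),F(x,y'))\sqsubseteq S(y,y')$ as functions of $(x,y,y')$, and $\inf_{y\in Y}F(x,y)=0$ for all $x$. Morphisms are equivalence classes $[F]$ of functional relations, with $F\sim F'$ iff $F\sqsubseteq F'$ as functions on $X\times Y$; identity $[R]$; composite of $[F]$ and $[H]$ is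 $[(x,z)\mapsto\inf_y\max(F(x,y),H(y,z))]$. *)

(* Defs.v *)
From Stdlib Require Import Reals.
Open Scope R_scope.

Definition sqsub {Z : Type} (alpha beta : Z -> R) : Prop :=
  forall eps, 0 < eps -> exists delta, 0 < delta /\
    forall z, alpha z <= delta -> beta z <= eps.

Definition is_metric1 (X : Type) (d : X -> X -> R) : Prop :=
  (forall x y, 0 <= d x y <= 1) /\
  (forall x y, d x y = 0 <-> x = y) /\
  (forall x y, d x y = d y x) /\
  (forall x y z, d x z <= d x y + d y z).

Definition cauchy_seq {X : Type} (d : X -> X -> R) (u : nat -> X) : Prop :=
  forall eps, 0 < eps -> exists N, forall m n, (N <= m)%nat -> (N <= n)%nat ->
    d (u m) (u n) < eps.

Definition converges_to {X : Type} (d : X -> X -> R) (u : nat -> X) (l : X) : Prop :=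
  forall eps, 0 < eps -> exists N, forall n, (N <= n)%nat -> d (u n) l < eps.

Definition is_cmet1 (X : Type) (d : X -> X -> R) : Prop :=
  is_metric1 X d /\
  (forall u : nat -> X, cauchy_seq d u -> exists l, converges_to d u l).

Definition unif_cont {X Y : Type} (dX : X -> X -> R) (dY : Y -> Y -> R)
  (f : X -> Y) : Prop :=
  forall eps, 0 < eps -> exists delta, 0 < delta /\
    forall x x', dX x x' < delta -> dY (f x) (f x') < eps.

Definition functional_relation {X Y : Type} (RX : X -> X -> R) (SY : Y -> Y -> R)
  (F : X -> Y -> R) : Prop :=
  (forall x y, 0 <= F x y <= 1) /\
  sqsub (fun p : X * X * Y * Y =>
           let '(x, x', y, y') := p in Rmax (F x y) (Rmax (RX x x') (SY y y')))
        (fun p : X * X * Y * Y =>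
           let '(x, x', y, y') := p in F x' y') /\
  sqsub (fun p : X * Y * Y =>
           let '(x, y, y') := p in Rmax (F x y) (F x y'))
        (fun p : X * Y * Y =>
           let '(x, y, y') := p in SY y y') /\
  (* inf_y F(x,y) = 0 (given F >= 0): *)
  (forall x eps, 0 < eps -> exists y, F x y < eps).

(* Equivalence of functional relations: F ~ F' iff F ⊑ F' on X × Y. *)
Definition fr_equiv {X Y : Type} (F F' : X -> Y -> R) : Prop :=
  sqsub (fun p : X * Y => F (fst p) (snd p)) (fun p : X * Y => F' (fst p) (snd p)).

Definition G_map {X Y : Type} (dY : Y -> Y -> R) (f : X -> Y) : X -> Y -> R :=
  fun x y => dY (f x) y.

(* Main.v *)
Require Import Defs.
From Stdlib Require Import Reals Lra Lia ClassicalEpsilon FunctionalExtensionality.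
Open Scope R_scope.

Lemma small_inv (delta : R) : 0 < delta ->
  exists N : nat, forall n, (N <= n)%nat -> / INR (S n) < delta.
Proof.
  intros Hd. destruct (archimed_cor1 delta Hd) as [N [HN HN0]].
  exists N. intros n Hn. eapply Rle_lt_trans; [|exact HN].
  apply Rinv_le_contravar. apply lt_0_INR; lia. apply le_INR; lia.
Qed.

Lemma inv_pos (n : nat) : 0 < / INR (S n).
Proof. apply Rinv_0_lt_compat. apply lt_0_INR; lia. Qed.

Theorem mainTheorem9 (X Y : Type) (dX : X -> X -> R) (dY : Y -> Y -> R)
  (HX : is_cmet1 X dX) (HY : is_cmet1 Y dY) (F : X -> Y -> R)
  (HF : functional_relation dX dY F) :
  exists f : X -> Y, (unif_cont dX dY f /\ fr_equiv F (G_map dY f)) /\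
    forall g : X -> Y, unif_cont dX dY g -> fr_equiv F (G_map dY g) -> g = f.
Proof.
  destruct HF as [Fb [A2 [A3 A4]]].
  destruct HY as [[dYb [dY0 [dYs dYt]]] HYc].
  destruct HX as [[dXb [dX0 [dXs dXt]]] _].
  assert (A3' : forall eps, 0 < eps -> exists delta, 0 < delta /\
     forall x y y', F x y <= delta -> F x y' <= delta -> dY y y' <= eps).
  { intros eps He. destruct (A3 eps He) as [d [Hd Hz]]. exists d; split; auto.
    intros x y y' H1 H2. apply (Hz (x, y, y')). simpl. apply Rmax_lub; auto. }
  set (ys := fun x n => proj1_sig (constructive_indefinite_description _
                (A4 x _ (inv_pos n)))).
  assert (Hys : forall x n, F x (ys x n) < / INR (S n)).
  { intros x n. unfold ys. destruct constructive_indefinite_description; auto. }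
  assert (Hcau : forall x, cauchy_seq dY (ys x)).
  { intros x eps He. destruct (A3' (eps/2) ltac:(lra)) as [d [Hd Hz]].
    destruct (small_inv d Hd) as [N HN]. exists N. intros m n Hm Hn.
    assert (dY (ys x m) (ys x n) <= eps/2); [|lra].
    apply (Hz x); left; (eapply Rlt_trans; [apply Hys| apply HN; auto]). }
  set (f := fun x => proj1_sig (constructive_indefinite_description _ (HYc _ (Hcau x)))).
  assert (Hf : forall x, converges_to dY (ys x) (f x)).
  { intros x. unfold f. destruct constructive_indefinite_description; auto. }
  assert (Heq : fr_equiv F (G_map dY f)).
  { intros eps He. destruct (A3' (eps/2) ltac:(lra)) as [d [Hd Hz]].
    exists d; split; auto. intros [x y]; simpl; unfold G_map. intros Hxy.
    destruct (Hf x (eps/2) ltac:(lra)) as [N1 HN1].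
    destruct (small_inv d Hd) as [N2 HN2].
    set (n := Nat.max N1 N2).
    assert (H1 := HN1 n ltac:(lia)).
    assert (H2 : dY (ys x n) y <= eps/2).
    { apply (Hz x); auto. left; eapply Rlt_trans; [apply Hys| apply HN2; lia]. }
    pose proof (dYt (f x) (ys x n) y). rewrite (dYs (f x) (ys x n)) in H. lra. }
  exists f. split; [split|].
  - intros eps He.
    destruct (Heq (eps/3) ltac:(lra)) as [da [Hda Hza]].
    destruct (A2 da Hda) as [d1 [Hd1 Hz1]].
    exists d1; split; auto. intros x x' Hxx'.
    destruct (A4 x (Rmin d1 da) ltac:(apply Rmin_pos; auto)) as [y Hy].
    assert (Hy1 : F x y <= d1) by (pose proof (Rmin_l d1 da); lra).
    assert (Hy2 : F x y <= da) by (pose proof (Rmin_r d1 da); lra).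
    assert (Hx'y : F x' y <= da).
    { apply (Hz1 (x, x', y, y)). simpl. apply Rmax_lub; auto.
      apply Rmax_lub; [lra|]. rewrite (proj2 (dY0 y y) eq_refl). lra. }
    pose proof (Hza (x, y) Hy2) as E1. pose proof (Hza (x', y) Hx'y) as E2.
    simpl in E1, E2. unfold G_map in E1, E2.
    pose proof (dYt (f x) y (f x')). rewrite (dYs y (f x')) in H. lra.
  - exact Heq.
  - intros g _ Hg. apply functional_extensionality. intros x.
    apply dY0.
    destruct (Rle_lt_or_eq_dec 0 (dY (g x) (f x)) (proj1 (dYb _ _))) as [Hlt|]; [|auto].
    exfalso. set (e := dY (g x) (f x)).
    destruct (Hg (e/3) ltac:(unfold e; lra)) as [da [Hda Hza]].
    destruct (Heq (e/3) ltac:(unfold e; lra)) as [db [Hdb Hzb]].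
    destruct (A4 x (Rmin da db) ltac:(apply Rmin_pos; auto)) as [y Hy].
    pose proof (Rmin_l da db). pose proof (Rmin_r da db).
    pose proof (Hza (x, y) ltac:(simpl; lra)) as E1.
    pose proof (Hzb (x, y) ltac:(simpl; lra)) as E2.
    simpl in E1, E2. unfold G_map in E1, E2.
    pose proof (dYt (g x) y (f x)). rewrite (dYs y (f x)) in H1. unfold e in *. lra.
Qed.
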